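(* Let $\tau$ be a Young diagram, $l>0$ an integer, $s\in C_\tau$, and $\mu=\Gamma(\tau,s,l)$. Then $|\mu|-|\tau|>0$ and $s=\frac{f(\mu)-f(\tau)}{|\mu|-|\tau|}$.
   Context: For a Young diagram $\lambda$, $|\lambda|$ is its number of cells, $\lambda'_j$ the length of its $j$-th column ($0$ if there is none), $ct(\lambda)=\sum_{(i,j)\in\lambda}(j-i)$, and $f(\lambda)=\frac{|\lambda|^2-|\lambda|}{2}+ct(\lambda)$. $C_\tau=\{|\tau|-1+j-\tau'_j: j\ge1\}$; for $s\in C_\tau$, $j_s$ is the unique $j\ge1$ with $s=|\tau|-1+j-\tau'_j$. $\mathbf{core}_{(\nu-s)}(\tau)$ is the diagram $\eta$ with $\eta'_j=\tau'_j+1$ for $1\le j<j_s$ and $\eta'_j=\tau'_{j+1}$ for $j\ge j_s$. For a diagram $\eta$ and integer $l\ge0$, $\mathbf{rec}(l,\eta)$ is the diagram $\lambda$ defined by taking $k\ge1$ with $\eta'_{k-1}\ge l+1>\eta'_k$ ($\eta'_0:=\infty$) and setting $\lambda'_j=\eta'_j-1$ for $j<k$, $\lambda'_k=l$, $\lambda'_j=\eta'_{j-1}$ for $j>k$. For $l\ge-\tau'_{j_s}$, $\Gamma(\tau,s,l):=\mathbf{rec}(\tau'_{j_s}+l,\mathbf{core}_{(\nu-s)}(\tau))$. *)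

(* Defs.v *)
From mathcomp Require Import all_boot all_order all_algebra.
Set Implicit Arguments. Unset Strict Implicit. Unset Printing Implicit Defensive.
Import Order.TTheory GRing.Theory Num.Theory.

(* A Young diagram is represented by the sequence of its column lengths
   [lambda'_1; lambda'_2; ...] : positive and nonincreasing. *)
Definition is_diagram (c : seq nat) : bool :=
  sorted geq c && all (fun x => 0 < x) c.

(* lambda'_j for j >= 1 (0 if there is no such column). *)
Definition col (c : seq nat) (j : nat) : nat := nth 0 c j.-1.

Definition ncells (c : seq nat) : nat := sumn c.

Definition ct (c : seq nat) : int :=
  (\sum_(j < size c) \sum_(i < nth 0 c j) ((j.+1)%:Z - (i.+1)%:Z))%R.

Definition f (c : seq nat) : rat :=
  ((((ncells c)%:R ^+ 2 - (ncells c)%:R) / 2%:R) + (ct c)%:~R)%R.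

Definition Cval (tau : seq nat) (j : nat) : int :=
  ((ncells tau)%:Z - 1 + j%:Z - (col tau j)%:Z)%R.

Definition inC (tau : seq nat) (s : int) : Prop :=
  exists2 j, (0 < j)%N & s = Cval tau j.

(* core_{(nu - s)}(tau), given j = j_s:
   eta'_j = tau'_j + 1 for 1 <= j < j_s, eta'_j = tau'_{j+1} for j >= j_s. *)
Definition core (tau : seq nat) (js : nat) : seq nat :=
  [seq (col tau j).+1 | j <- iota 1 js.-1] ++ drop js tau.

(* rec(l, eta): k is the first column (1-based) with l+1 > eta'_k,
   i.e. k = k0 + 1 with k0 = find (fun x => x <= l) eta; then
   lambda'_j = eta'_j - 1 (j < k), lambda'_k = l, lambda'_j = eta'_{j-1} (j > k). *)
Definition rec (l : nat) (eta : seq nat) : seq nat :=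
  let k0 := find (fun x => x <= l) eta in
  [seq x.-1 | x <- take k0 eta] ++ l :: drop k0 eta.

(* Gamma(tau, s, l) with j_s given (l >= 0 here, so l >= -tau'_{j_s} holds). *)
Definition Gamma (tau : seq nat) (js : nat) (l : nat) : seq nat :=
  rec (col tau js + l) (core tau js).

(* Main.v *)
Require Import Defs.
From mathcomp Require Import all_boot all_order all_algebra.
From mathcomp Require Import ring lra zify.
Import Order.TTheory GRing.Theory Num.Theory.

Section Helpers.
Local Open Scope ring_scope.


Definition GQ (j x : nat) : rat := j%:R * x%:R - x%:R * (x%:R + 1) / 2%:R.

Lemma Gz_GQ (j x : nat) :
  ((\sum_(i < x) (j%:Z - (i.+1)%:Z)) %:~R : rat) = GQ j x.
Proof.
elim: x => [|x IH]; first by rewrite big_ord0 /GQ; field.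
rewrite big_ord_recr rmorphD /= IH /GQ rmorphB /=.
rewrite !pmulrn /= -!natz; rewrite -[x.+1]addn1 natrD; field.
by [].
Qed.

Lemma sum_ext (c : seq nat) (N : nat) : (size c <= N)%N ->
  (ncells c)%:R = \sum_(0 <= i < N) ((nth 0 c i)%:R : rat).
Proof.
elim: c N => [|x c IH] N HN.
  by rewrite big1 // => i _; rewrite nth_nil.
case: N HN => [|N] //= HN.
rewrite big_nat_recl //= -IH // /ncells /= natrD.
by [].
Qed.

Lemma ct_ext (c : seq nat) (N : nat) : (size c <= N)%N ->
  (ct c)%:~R = \sum_(0 <= i < N) (GQ i.+1 (nth 0 c i) : rat).
Proof.
move=> HN; rewrite /ct rmorph_sum /= (@big_cat_nat _ _ _ (size c) 0 N _ _ (leq0n _) HN) /=.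
rewrite [X in _ + X]big1_seq ?addr0; last first.
  move=> i; rewrite mem_index_iota => /andP [Hi Hi2].
  rewrite nth_default // /GQ. set z := (0%:R : rat). have ->: z = 0 by []. rewrite !(mulr0, mul0r) subr0.
  by []. by case/andP: Hi2.
rewrite big_mkord.
apply: eq_bigr => i _; exact: Gz_GQ.
Qed.



Lemma T1 (u : nat -> nat) p d :
  \sum_(p.+1 <= i < (p+d).+1) ((u i.-1)%:R + 1 - (u i)%:R : rat)
  = (u p)%:R - (u (p+d)%N)%:R + d%:R.
Proof.
elim: d => [|d IH].
  by rewrite addn0 big_geq // subrr add0r.
rewrite addnS big_nat_recr /=; last by rewrite ltnS leq_addr.
rewrite IH -natr1; ring.
Qed.

Lemma GQS j x : GQ j.+1 x.+1 = GQ j x + j%:R.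
Proof. rewrite /GQ -!natr1; by field. Qed.

Lemma T2 (u : nat -> nat) p d :
  \sum_(p.+1 <= i < (p+d).+1) (GQ i.+1 (u i.-1).+1 - GQ i.+1 (u i))
  = GQ p.+1 (u p) - GQ (p+d).+1 (u (p+d)%N) + d%:R * p%:R + d%:R * (d%:R + 1) / 2%:R.
Proof.
elim: d => [|d IH].
  by rewrite addn0 big_geq // subrr add0r mul0r mul0r addr0.
rewrite addnS big_nat_recr /=; last by rewrite ltnS leq_addr.
rewrite IH GQS.
rewrite -[(p+d).+1%:R]natr1 natrD -[d.+1%:R]natr1; by field.
Qed.



Lemma split3 (F : nat -> rat) p a N : (p <= a)%N -> (a < N)%N ->
  (forall i, (i < p)%N -> F i = 0) -> (forall i, (a < i)%N -> (i < N)%N -> F i = 0) ->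
  \sum_(0 <= i < N) F i = F p + \sum_(p.+1 <= i < a.+1) F i.
Proof.
move=> hpa haN h1 h2.
rewrite (@big_cat_nat _ _ _ p 0 N) //=; last by lia.
rewrite big1_seq ?add0r; last first.
  by move=> i; rewrite mem_index_iota => /andP[_ /andP[_ hi]]; apply: h1.
rewrite big_ltn; last by lia.
rewrite (@big_cat_nat _ _ _ a.+1 p.+1 N) //=; try lia.
rewrite [X in _ + (_ + X)]big1_seq ?addr0 //.
by move=> i; rewrite mem_index_iota => /andP[_ /andP[hi hi2]]; apply: h2.
Qed.

Lemma nthA (tau : seq nat) a i : (i < a)%N ->
  nth 0 [seq (Defs.col tau j).+1 | j <- iota 1 a] i = (nth 0 tau i).+1.
Proof.
move=> hi; rewrite (nth_map 0); last by rewrite size_iota.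
by rewrite nth_iota // /Defs.col add1n.
Qed.

Lemma sorted_geq_nth (tau : seq nat) i j : sorted geq tau -> (i <= j)%N ->
  (nth 0 tau j <= nth 0 tau i)%N.
Proof.
move=> hs hij.
case: (ltnP j (size tau)) => hj; last by rewrite nth_default.
have := @sorted_leq_nth _ geq _ _ 0 tau hs i j.
apply; rewrite ?inE //; try lia.
- by move=> x y z h1 h2; apply: leq_trans h2 h1.
- by move=> x; rewrite /geq /=.
Qed.

Lemma p_le_a (tau : seq nat) a l : sorted geq tau ->
  (find (fun x => x <= nth 0 tau a + l)%N (core tau a.+1) <= a)%N.
Proof.
move=> hs; rewrite /core /= find_cat size_map size_iota.
case: ifP => [hh|_].
  apply: ltnW; move: hh; rewrite has_find size_map size_iota; done.
case E: (drop a.+1 tau) => [|x r] /=; first by rewrite addn0.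
have hx : x = nth 0 tau a.+1 by rewrite -[a.+1]addn0 -nth_drop E.
suff -> : (x <= nth 0 tau a + l)%N by rewrite addn0.
rewrite hx; apply: leq_trans (leq_addr _ _); exact: sorted_geq_nth.
Qed.

Lemma nth_core (tau : seq nat) a j :
  nth 0 (core tau a.+1) j = if (j < a)%N then (nth 0 tau j).+1 else nth 0 tau j.+1.
Proof.
rewrite /core /= nth_cat size_map size_iota.
case: ifP => hj; first exact: nthA.
rewrite nth_drop; congr nth; lia.
Qed.

Lemma size_core (tau : seq nat) a : size (core tau a.+1) = (a + (size tau - a.+1))%N.
Proof. by rewrite /core size_cat size_map size_iota size_drop. Qed.

Lemma mu_nth (tau : seq nat) a l i : sorted geq tau ->
  let L := (nth 0 tau a + l)%N in
  let p := find (fun x => x <= L)%N (core tau a.+1) in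
  nth 0 (Gamma tau a.+1 l) i =
   if (i < p)%N then nth 0 tau i else if i == p then L
   else if (i <= a)%N then (nth 0 tau i.-1).+1 else nth 0 tau i.
Proof.
move=> hs L p.
have hpa : (p <= a)%N by apply: p_le_a.
have hps : (p <= size (core tau a.+1))%N by rewrite size_core; lia.
rewrite /Gamma /rec -/L -/p nth_cat size_map (size_takel hps).
case: ifP => hip.
  rewrite (nth_map 0); last by rewrite (size_takel hps).
  rewrite nth_take // nth_core; case: ifP => // /negbT; lia.
move/negbT: hip; rewrite -leqNgt => hip.
case: eqP => [->|hne]; first by rewrite subnn.
have -> : (i - p = (i - p).-1.+1)%N by lia.
rewrite /= nth_drop nth_core.
have -> : (p + (i - p).-1 = i.-1)%N by lia.
case: ifP => h1; case: ifP => h2 //; move: h1 h2.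
- move=> h1 /negbT; lia.
- move=> /negbT; lia.
- move=> _ _; have -> : i.-1.+1 = i by lia. by [].
Qed.

End Helpers.

Theorem mainTheorem10 (tau : seq nat) (l : nat) (s : int) (js : nat) :
  is_diagram tau -> (0 < l)%N ->
  (0 < js)%N -> s = Cval tau js ->
  let mu := Gamma tau js l in
  (0 < (ncells mu)%:Z - (ncells tau)%:Z)%R /\
  (s%:~R : rat) = ((f mu - f tau) / ((ncells mu)%:R - (ncells tau)%:R))%R.
Proof.
move=> hd hl hjs ->.
case: js hjs => [//|a] _ mu.
have hs : sorted geq tau by case/andP: hd.
set L := (nth 0 tau a + l)%N.
set p := find (fun x => x <= L)%N (core tau a.+1).
have hpa : (p <= a)%N by apply: p_le_a.
set d := (a - p)%N.
have Ea : a = (p + d)%N by rewrite /d; lia.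
set u := nth 0 tau.
have hmu : forall i, _ := fun i => mu_nth tau a l i hs.
rewrite -/L -/p in hmu.
set N := (size tau + a.+1)%N.
have hsmu : (size mu <= N)%N.
  have EL : (Defs.col tau a.+1 + l)%N = L by [].
  rewrite /mu /Gamma /rec EL -/p size_cat size_map size_takel /=; last first.
    rewrite size_core; lia.
  rewrite size_drop size_core; lia.
have hst : (size tau <= N)%N by rewrite /N; lia.
have HN : ((ncells mu)%:R - (ncells tau)%:R = l%:R + d%:R :> rat)%R.
  rewrite (sum_ext _ _ hsmu) (sum_ext _ _ hst) -sumrB.
  rewrite (@split3 _ p a N hpa); last first.
  - move=> i h1 h2; rewrite /mu hmu.
    have -> : (i < p)%N = false by lia.
    have -> : (i == p) = false by apply/eqP; lia.
    have -> : (i <= a)%N = false by lia.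
    by rewrite subrr.
  - move=> i h1; rewrite /mu hmu h1; by rewrite subrr.
  - rewrite /N; lia.
  rewrite /mu hmu ltnn eqxx.
  rewrite (@eq_big_nat _ _ _ _ _ _ (fun i => (u i.-1)%:R + 1 - (u i)%:R)%R); last first.
    move=> i /andP[h1 h2]; rewrite hmu.
    have -> : (i < p)%N = false by lia.
    have -> : (i == p) = false by apply/eqP; lia.
    have -> : (i <= a)%N by lia.
    by rewrite -natr1.
  have := T1 u p d; rewrite -Ea => ->.
  rewrite /L natrD /u; ring.
have HC : ((ct mu)%:~R - (ct tau)%:~R = GQ p.+1 L - GQ (p+d).+1 (u (p+d)%N)
     + d%:R * p%:R + d%:R * (d%:R + 1) / 2%:R :> rat)%R.
  rewrite (ct_ext _ _ hsmu) (ct_ext _ _ hst) -sumrB.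
  rewrite (@split3 _ p a N hpa); last first.
  - move=> i h1 h2; rewrite /mu hmu.
    have -> : (i < p)%N = false by lia.
    have -> : (i == p) = false by apply/eqP; lia.
    have -> : (i <= a)%N = false by lia.
    by rewrite subrr.
  - move=> i h1; rewrite /mu hmu h1; by rewrite subrr.
  - rewrite /N; lia.
  rewrite /mu hmu ltnn eqxx.
  rewrite (@eq_big_nat _ _ _ _ _ _ (fun i => GQ i.+1 (u i.-1).+1 - GQ i.+1 (u i))%R); last first.
    move=> i /andP[h1 h2]; rewrite hmu.
    have -> : (i < p)%N = false by lia.
    have -> : (i == p) = false by apply/eqP; lia.
    have -> : (i <= a)%N by lia.
    by [].
  have := T2 u p d; rewrite -Ea => ->.
  rewrite /u; ring.
have Hm : ncells mu = (ncells tau + (l + d))%N.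
  apply/eqP; rewrite -(eqr_nat rat) !natrD; apply/eqP.
  by rewrite -HN; ring.
split; first by rewrite Hm; lia.
have Hm' : ((ncells mu)%:R = (ncells tau)%:R + l%:R + d%:R :> rat)%R.
  by rewrite Hm !natrD addrA.
have HC' : ((ct mu)%:~R = (ct tau)%:~R + (GQ p.+1 L - GQ (p+d).+1 (u (p+d)%N)
     + d%:R * p%:R + d%:R * (d%:R + 1) / 2%:R) :> rat)%R.
  by rewrite -HC; ring.
have EL : L = (u a + l)%N by [].
have Ecol : Defs.col tau a.+1 = u a by [].
rewrite HN /f Hm' HC' /Cval Ecol EL.
rewrite Ea; move: (u (p + d)%N) => ua.
rewrite !rmorphB !rmorphD /= rmorphN1 -!pmulrn /GQ.
rewrite -!natr1 !natrD.
have hz : ((l%:R + d%:R) != 0 :> rat)%R.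
  by rewrite -natrD pnatr_eq0; lia.
by field.
Qed.
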